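(* Let $\succ=(\succ_s)_{s\in S}$ be a priority profile in which every $\succ_s$ is a partial order on $I$. Then $$f^{\succ}=\bigcup_{\succ'\in\mathcal{E}(\succ)}\{EA(\succ,\succ')\}.$$
   Context: A partial order on $I$ is an asymmetric and transitive relation; a total order is a partial order that is also negatively transitive and complete. School choice setup: $I$ finite set of students ($|I|\ge 3$), $S$ finite set of schools; each student $i$ has a total order $P_i$ on $S\cup\{\emptyset\}$ ($sR_is'$ means $sP_is'$ or $s=s'$); each school $s$ has capacity $q_s\in\mathbb{Z}_{++}$ and an asymmetric priority relation $\succ_s$ on $I$. A matching $\mu$ assigns each $i$ to $\mu(i)\in S\cup\{\emptyset\}$ with $|\mu(s)|\le q_s$, $\mu(s)=\{i:\mu(i)=s\}$. $\mu$ is stable for $\succ$ if individually rational ($\mu(i)R_i\emptyset$), non-wasteful ($sP_i\mu(i)$ implies $|\mu(s)|=q_s$) and fair (no $s$, $j\in\mu(s)$, $i\notin\mu(s)$ with $sR_i\mu(i)$ and $(i,j)\in\succ_s$). Pareto dominance: $\mu'(i)R_i\mu(i)$ for all $i$, strict for some $i$. An SOSM for $\succ$ is a stable matching not Pareto dominated by any stable matching; $f^\succ$ is the set of SOSMs. An extension of $\succ_s$ is a total order on $I$ containing $\succ_s$; $\mathcal{E}(\succ)$ is the set of profiles of extensions. For a profile of total orders the SOSM is unique (it is the student-proposing deferred acceptance outcome). EADAM (Tang–Yu version): given $\succ$ and $\succ'\in\mathcal{E}(\succ)$, Round 0: compute the SOSM for $\succ'$. Round $k\ge1$: (1) with respect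 to the current problem and the matching of Round $k-1$, call a remaining school $s$ underdemanded if no remaining student $i$ has $sP_i\mu(i)$; fix the assignments at underdemanded schools, and remove these schools, the students matched to them, and the remaining students who are unmatched (matched to $\emptyset$); (2) for each removed student $i$ and each remaining school $s$ with $sP_i(\text{assignment of }i)$, and each remaining student $j$ with $(i,j)\in\succ_s$, delete $s$ from $j$'s preference list; (3) compute the SOSM for the subproblem consisting of the remaining schools and students, with the (possibly modified) preferences and the priorities $\succ'$ restricted to remaining students. The algorithm stops when all schools are removed; $EA(\succ,\succ')$ denotes the matching given by all fixed assignments. *)

(* Defs.v *)
From mathcomp Require Import all_boot.
Set Implicit Arguments. Unset Strict Implicit. Unset Printing Implicit Defensive.

Section Orders.
Variable T : Type.
Definition asymmetric (r : rel T) := forall x y, r x y -> ~~ r y x.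
Definition negatively_transitive (r : rel T) :=
  forall x y z, ~~ r x y -> ~~ r y z -> ~~ r x z.
Definition complete_rel (r : rel T) := forall x y, x <> y -> r x y \/ r y x.
Definition partial_order (r : rel T) := asymmetric r /\ transitive r.
Definition total_order (r : rel T) :=
  partial_order r /\ negatively_transitive r /\ complete_rel r.
End Orders.

Section SchoolChoice.
Variables (I S : finType).

(* A (sub)problem: remaining students R, remaining schools T, student
   preferences P (strict, on S + {emptyset} = option S), capacities q,
   priorities pri. A matching is mu : I -> option S (None = emptyset);
   only its values on R matter. *)
Variables (R : {set I}) (T : {set S}) (P : I -> rel (option S))
          (q : S -> nat) (pri : S -> rel I).

Definition wpref (i : I) (x y : option S) := P i x y || (x == y).

Definition assigned (mu : I -> option S) (s : S) : {set I} :=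
  [set i in R | mu i == Some s].

Definition is_matching (mu : I -> option S) :=
  (forall i, i \in R -> forall s, mu i = Some s -> s \in T) /\
  (forall s, s \in T -> #|assigned mu s| <= q s).

Definition individually_rational (mu : I -> option S) :=
  forall i, i \in R -> wpref i (mu i) None.

Definition non_wasteful (mu : I -> option S) :=
  forall i s, i \in R -> s \in T -> P i (Some s) (mu i) -> #|assigned mu s| = q s.

Definition fair (mu : I -> option S) :=
  ~ exists s i j, s \in T /\ i \in R /\ j \in assigned mu s /\
                  i \notin assigned mu s /\
                  wpref i (Some s) (mu i) /\ pri s i j.

Definition stable (mu : I -> option S) :=
  [/\ is_matching mu, individually_rational mu, non_wasteful mu & fair mu].

Definition pareto_dominates (mu' mu : I -> option S) :=
  (forall i, i \in R -> wpref i (mu' i) (mu i)) /\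
  (exists i, i \in R /\ P i (mu' i) (mu i)).

Definition sosm (mu : I -> option S) :=
  stable mu /\ ~ exists mu', stable mu' /\ pareto_dominates mu' mu.

End SchoolChoice.

Definition f_sosm (I S : finType) (P : I -> rel (option S)) (q : S -> nat)
  (pri : S -> rel I) (mu : I -> option S) : Prop :=
  sosm [set: I] [set: S] P q pri mu.

Definition extension (I S : finType) (pri pri' : S -> rel I) :=
  forall s, total_order (pri' s) /\ (forall i j, pri s i j -> pri' s i j).

Section EADAM.
Variables (I S : finType) (P : I -> rel (option S)) (q : S -> nat)
          (pri pri' : S -> rel I).

(* Preferences after deleting the schools in del j from student j's list:
   deleted schools become unacceptable (ranked below emptyset). *)
Definition is_deleted (del : I -> {set S}) (j : I) (x : option S) : bool :=
  if x is Some s then s \in del j else false.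
Definition modpref (del : I -> {set S}) (j : I) (x y : option S) : bool :=
  (~~ is_deleted del j x && is_deleted del j y) ||
  ((is_deleted del j x == is_deleted del j y) && P j x y).

Definition underdemanded (R : {set I}) (T : {set S}) (del : I -> {set S})
  (mu : I -> option S) : {set S} :=
  [set s in T | [forall i in R, ~~ modpref del i (Some s) (mu i)]].

Definition removed_students (R : {set I}) (U : {set S}) (mu : I -> option S)
  : {set I} :=
  [set i in R | if mu i is Some s then s \in U else true].

(* step (2): for each removed i, remaining s with s P_i mu(i), and remaining
   j with (i, j) in pri s (the ORIGINAL priorities), delete s from j's list *)
Definition new_del (R' : {set I}) (T' : {set S}) (D : {set I})
  (mu : I -> option S) (del : I -> {set S}) (j : I) : {set S} :=
  del j :|: [set s in T' | (j \in R') &&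
                [exists i in D, P i (Some s) (mu i) && pri s i j]].

(* eadam_run R T del out final : starting from the current problem (remaining
   students R, schools T, deletions del, fixed assignments out), the
   algorithm computes an SOSM mu of the current subproblem (w.r.t. pri'),
   performs a round (steps (1),(2)), and either stops (all schools removed)
   with final matching the fixed assignments, or continues. *)
Inductive eadam_run : {set I} -> {set S} -> (I -> {set S}) -> (I -> option S)
                      -> (I -> option S) -> Prop :=
| eadam_stop R T del out mu final :
    sosm R T (modpref del) q pri' mu ->
    let U := underdemanded R T del mu in
    let D := removed_students R U mu in
    let out' := fun i => if i \in D then mu i else out i in
    T :\: U = set0 ->
    (forall i, final i = out' i) ->
    eadam_run R T del out final
| eadam_continue R T del out mu final :
    sosm R T (modpref del) q pri' mu ->
    let U := underdemanded R T del mu in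
    let D := removed_students R U mu in
    let R' := R :\: D in
    let T' := T :\: U in
    let out' := fun i => if i \in D then mu i else out i in
    T' <> set0 ->
    eadam_run R' T' (new_del R' T' D mu del) out' final ->
    eadam_run R T del out final.

Definition EA (mu : I -> option S) : Prop :=
  eadam_run [set: I] [set: S] (fun _ => set0) (fun _ => None) mu.

End EADAM.

(* Main.v *)
Require Import Defs.
From mathcomp Require Import all_boot zify.
From Stdlib Require Import FunctionalExtensionality.
Set Implicit Arguments. Unset Strict Implicit. Unset Printing Implicit Defensive.

Definition sto (T : Type) (r : rel T) := asymmetric r /\ transitive r /\ complete_rel r.

Lemma card_sum (I : finType) (A : {set I}) (p : pred I) :
  #|[set x in A | p x]| = \sum_(x in A) p x.
Proof.
rewrite -sum1dep_card big_mkcondr /=; apply: eq_bigr => x _; by case: (p x).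
Qed.


Lemma max_ex (J : finType) (r : rel J) (W : {set J}) : asymmetric r -> transitive r ->
  W != set0 -> exists2 j, j \in W & forall k, k \in W -> ~~ r k j.
Proof.
move=> Ha Ht /set0Pn [j0 j0W].
case: (arg_minnP (fun j => #|[set x | r x j]|) j0W) => j jW Hmin.
exists j => // k kW; apply/negP => rkj.
have := Hmin k kW; rewrite leqNgt => /negP; apply; apply: proper_card; apply/properP; split.
  apply/subsetP => x; rewrite !inE => rxk; exact: Ht rxk rkj.
exists k; rewrite !inE //; apply/negP => rkk; move: (Ha _ _ rkk); by rewrite rkk.
Qed.

Section Prob.
Variables (I S : finType) (R : {set I}) (T : {set S}) (Pr : I -> rel (option S)) (q : S -> nat).
Hypothesis HPr : forall i, sto (Pr i).

Lemma Pr_irr i x : ~~ Pr i x x.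
Proof. case: (HPr i) => Ha _; apply/negP => H; move: (Ha _ _ H); by rewrite H. Qed.
Lemma Pr_asym i x y : Pr i x y -> ~~ Pr i y x.
Proof. case: (HPr i) => Ha _; exact: Ha. Qed.
Lemma Pr_trans i x y z : Pr i x y -> Pr i y z -> Pr i x z.
Proof. case: (HPr i) => _ [Ht _] H1 H2; exact: (Ht y x z). Qed.
Lemma Pr_neq i x y : Pr i x y -> x <> y.
Proof. move=> H E; subst; by rewrite (negbTE (Pr_irr _ _)) in H. Qed.
Lemma Pr_tot i x y : x <> y -> Pr i x y \/ Pr i y x.
Proof. case: (HPr i) => _ [_ Hc]; exact: Hc. Qed.

Lemma wprefP i x y : reflect (Pr i x y \/ x = y) (wpref Pr i x y).
Proof. rewrite /wpref; apply: (iffP orP) => -[H|H]; auto; [right; exact/eqP | right; exact/eqP]. Qed.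
Lemma wpref_refl i x : wpref Pr i x x.
Proof. by rewrite /wpref eqxx orbT. Qed.
Lemma wpref_trans i x y z : wpref Pr i x y -> wpref Pr i y z -> wpref Pr i x z.
Proof.
move=> /wprefP [H1|<-] /wprefP [H2|<-]; apply/wprefP; auto; left; exact: Pr_trans H1 H2.
Qed.
Lemma wPr_trans i x y z : wpref Pr i x y -> Pr i y z -> Pr i x z.
Proof. by move=> /wprefP [H1|<-] // H2; exact: Pr_trans H1 H2. Qed.
Lemma Prw_trans i x y z : Pr i x y -> wpref Pr i y z -> Pr i x z.
Proof. by move=> H1 /wprefP [H2|<-] //; exact: Pr_trans H1 H2. Qed.
Lemma wpref_neq i x y : wpref Pr i x y -> x <> y -> Pr i x y.
Proof. by move=> /wprefP [H|H] // /(_ H). Qed.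
Lemma nPr_wpref i x y : ~~ Pr i y x -> wpref Pr i x y.
Proof.
move=> H; apply/wprefP; case: (eqVneq x y) => [->|/eqP ne]; auto.
case: (Pr_tot i ne) => H'; auto; by rewrite H' in H.
Qed.
Lemma wpref_nPr i x y : wpref Pr i x y -> ~~ Pr i y x.
Proof. move=> /wprefP [H|<-]; [exact: Pr_asym | exact: Pr_irr]. Qed.
Lemma wpref_antisym i x y : wpref Pr i x y -> wpref Pr i y x -> x = y.
Proof. move=> /wprefP [H|//] /wpref_nPr; by rewrite H. Qed.


Lemma sum_opt (A : {set I}) (F : I -> option S) :
  (forall i s, i \in A -> F i = Some s -> s \in T) ->
  \sum_(s in T) #|[set i in A | F i == Some s]| = #|[set i in A | F i != None]|.
Proof.
move=> HF.
rewrite (eq_bigr (fun s => \sum_(i in A) (F i == Some s))); last by move=> s _; rewrite card_sum.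
rewrite exchange_big /= card_sum; apply: eq_bigr => i iA.
case E: (F i) => [s|] /=.
- rewrite (bigD1 s) ?(HF _ _ iA E) //= eqxx big1 // => s' /andP[_ ne].
  by case: eqP => // -[] E'; rewrite E' eqxx in ne.
- by rewrite big1.
Qed.

Lemma sum_eq_le (J : finType) (P : pred J) (f g : J -> nat) :
  (forall j, P j -> f j <= g j) -> \sum_(j | P j) g j <= \sum_(j | P j) f j ->
  forall j, P j -> f j = g j.
Proof.
move=> Hle Hs j Pj; apply/eqP; rewrite eqn_leq Hle //=.
move: Hs; rewrite (bigD1 j) //= [X in _ <= X](bigD1 j) //=.
have : \sum_(k | P k && (k != j)) f k <= \sum_(k | P k && (k != j)) g k.
  by apply: leq_sum => k /andP[Pk _]; exact: Hle.
lia.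
Qed.

Lemma K mu lam :
  is_matching R T q mu -> individually_rational R Pr mu -> non_wasteful R T Pr q mu ->
  is_matching R T q lam -> (forall i, i \in R -> wpref Pr i (lam i) (mu i)) ->
  (forall s, s \in T -> #|assigned R lam s| = #|assigned R mu s|) /\
  (forall i, i \in R -> lam i <> mu i -> exists s, mu i = Some s /\
      exists j, j \in R /\ lam j = Some s /\ Pr j (Some s) (mu j)).
Proof.
move=> [muT muC] muIR muNW [lamT lamC] dom.
set A := [set i in R | lam i != mu i].
have AR : forall i, i \in A -> i \in R by move=> i; rewrite inE => /andP[].
have impr : forall i, i \in A -> Pr i (lam i) (mu i).
  move=> i; rewrite inE => /andP[iR ne]; apply: wpref_neq => //; [exact: dom | exact/eqP].
have lamN : forall i, i \in A -> lam i != None.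
  move=> i iA; apply/eqP => E; have := impr _ iA; rewrite E => H.
  have := muIR _ (AR _ iA) => /wpref_nPr; rewrite H; exact.
set inn := fun s => #|[set i in A | lam i == Some s]|.
set out := fun s => #|[set i in A | mu i == Some s]|.
have sin : \sum_(s in T) inn s = #|A|.
  rewrite /inn sum_opt; last by move=> i s iA; apply: lamT; exact: AR.
  apply: eq_card => i; rewrite inE; case iA: (i \in A) => //=; exact: lamN.
have sout : \sum_(s in T) out s <= #|A|.
  rewrite /out sum_opt; last by move=> i s iA; apply: muT; exact: AR.
  apply: subset_leq_card; apply/subsetP => i; rewrite inE => /andP[] //.
have decl : forall s, #|assigned R lam s| =
   #|[set i in R | (lam i == Some s) && (lam i == mu i)]| + inn s.
  move=> s; rewrite -(cardsID [set i | lam i == mu i]); congr (_ + _); apply: eq_card => i;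
  rewrite !inE; case: (i \in R) => //=; case: (lam i =P mu i) => [E|_]; rewrite ?E ?andbT ?andbF //= andbC.
have decm : forall s, #|assigned R mu s| =
   #|[set i in R | (lam i == Some s) && (lam i == mu i)]| + out s.
  move=> s; rewrite -(cardsID [set i | lam i == mu i]); congr (_ + _); apply: eq_card => i;
  rewrite !inE; case: (i \in R) => //=; case: (lam i =P mu i) => [E|_]; rewrite ?E ?andbT ?andbF //= andbC.
have inpos : forall s, s \in T -> 0 < inn s ->
   exists j, j \in R /\ lam j = Some s /\ Pr j (Some s) (mu j).
  move=> s sT; rewrite card_gt0 => /set0Pn [j]; rewrite inE => /andP[jA /eqP E].
  exists j; split; first exact: AR; split=> //; rewrite -E; exact: impr.
have le : forall s, s \in T -> inn s <= out s.
  move=> s sT; case: (posnP (inn s)) => [->//|/(inpos _ sT) [j [jR [E H]]]].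
  have := muNW _ _ jR sT H; have := lamC _ sT; rewrite decl decm; lia.
have eqs : forall s, s \in T -> inn s = out s.
  apply: sum_eq_le => //; rewrite sin; exact: sout.
split.
  by move=> s sT; rewrite decl decm eqs.
move=> i iR ne.
have iA : i \in A by rewrite inE iR; apply/eqP.
have : \sum_(s in T) out s = #|A| by rewrite -sin; apply: eq_bigr => s sT; rewrite eqs.
rewrite /out sum_opt; last by move=> i' s iA'; apply: muT; exact: AR.
move=> Hc.
have : i \in [set i in A | mu i != None].
  have Hsub : [set i in A | mu i != None] \subset A by apply/subsetP => x; rewrite inE => /andP[].
  have -> : [set i in A | mu i != None] = A by apply/eqP; rewrite eqEcard Hsub Hc leqnn.
  exact: iA.
rewrite inE iA /=; case E: (mu i) => [s|] //= _.
have sT := muT _ iR _ E.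
have : 0 < inn s.
  rewrite eqs // /out card_gt0; apply/set0Pn; exists i; by rewrite inE iA E eqxx.
move=> /(inpos _ sT) H; by exists s.
Qed.


Lemma assignedP (mu : I -> option S) (s : S) (i : I) : (i \in assigned R mu s) = (i \in R) && (mu i == Some s).
Proof. by rewrite inE. Qed.

Lemma Pr_notin (mu : I -> option S) (s : S) (i : I) : Pr i (Some s) (mu i) -> i \notin assigned R mu s.
Proof.
move=> H; rewrite assignedP negb_and; apply/orP; right; apply/eqP => E.
by move: H; rewrite E (negbTE (Pr_irr _ _)).
Qed.

Lemma fairP (pr : S -> rel I) (mu : I -> option S) : fair R T Pr pr mu -> forall s i j, s \in T -> i \in R ->
  mu j = Some s -> j \in R -> Pr i (Some s) (mu i) -> ~~ pr s i j.
Proof.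
move=> F s i j sT iR E jR H; apply/negP => Hp; apply: F; exists s, i, j; split => //; split => //.
split; first by rewrite assignedP jR E eqxx.
split; first exact: Pr_notin.
split => //; apply/wprefP; by left.
Qed.

Lemma L1 (pr : S -> rel I) : (forall s, asymmetric (pr s)) -> (forall s, complete_rel (pr s)) ->
  forall mu mu', sosm R T Pr q pr mu -> stable R T Pr q pr mu' ->
  forall i, i \in R -> wpref Pr i (mu i) (mu' i).
Proof.
move=> Pas Pco mu mu' [[[muT muC] muIR muNW muF] muO] [[mu'T mu'C] mu'IR mu'NW mu'F] i0 i0R.
case: (boolP (wpref Pr i0 (mu i0) (mu' i0))) => // nw; exfalso.
have Hi0 : Pr i0 (mu' i0) (mu i0).
  apply/negPn/negP => H; move: nw; by rewrite nPr_wpref.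
pose lam i := if Pr i (mu' i) (mu i) then mu' i else mu i.
have lmu : forall i, wpref Pr i (lam i) (mu i).
  move=> i; rewrite /lam; case: ifP => H; [apply/wprefP; by left | exact: wpref_refl].
have lmu' : forall i, wpref Pr i (lam i) (mu' i).
  move=> i; rewrite /lam; case: ifP => H; [exact: wpref_refl | apply: nPr_wpref; by rewrite H].
have lamor : forall i, lam i = mu i \/ lam i = mu' i.
  move=> i; rewrite /lam; case: ifP; auto.
have lamT : forall i, i \in R -> forall s, lam i = Some s -> s \in T.
  move=> i iR s; case: (lamor i) => ->; [exact: muT | exact: mu'T].
have lamC : forall s, s \in T -> #|assigned R lam s| <= q s.
  move=> s sT.
  case: (boolP [exists i in R, (mu' i == Some s) && Pr i (Some s) (mu i)]).
  - move=> /existsP [i /and3P [iR /eqP Ei Hi]].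
    apply: leq_trans (mu'C _ sT); apply: subset_leq_card; apply/subsetP => j.
    rewrite !assignedP => /andP [jR /eqP Ej]; rewrite jR /=.
    move: Ej; rewrite /lam; case: ifP => [_ -> //|Hj Ej].
    apply/eqP; case: (eqVneq (mu' j) (Some s)) => // /eqP ne.
    have ij : i <> j by move=> E; subst; rewrite Ei in ne.
    case: (Pr_tot j ne) => H; first by rewrite Ej H in Hj.
    have n1 := fairP mu'F sT jR Ei iR H.
    have n2 := fairP muF sT iR Ej jR Hi.
    by case: (Pco s _ _ ij) => Hp; [rewrite Hp in n2 | rewrite Hp in n1].
  - rewrite negb_exists => /forallP Hn.
    apply: leq_trans (muC _ sT); apply: subset_leq_card; apply/subsetP => j.
    rewrite !assignedP => /andP [jR /eqP Ej]; rewrite jR /=.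
    move: Ej; rewrite /lam; case: ifP => [Hj Ej|_ ->//].
    move: (Hn j); by rewrite jR Ej eqxx -Ej Hj.
have lamM : is_matching R T q lam by split.
have Kl := K (conj muT muC) muIR muNW lamM (fun i _ => lmu i).
apply: muO; exists lam; split; last first.
  split; first by move=> i _; exact: lmu.
  by exists i0; split => //; rewrite /lam Hi0.
split => //.
- move=> i iR; case: (lamor i) => ->; [exact: muIR | exact: mu'IR].
- move=> i s iR sT H.
  have H' : Pr i (Some s) (mu i) := Prw_trans H (lmu i).
  rewrite Kl.1 //; apply/eqP; rewrite eqn_leq muC //=; by rewrite (muNW _ _ iR sT H').
- move=> [s [i [j [sT [iR [jin [inot [wp Hp]]]]]]]].
  move: jin; rewrite assignedP => /andP [jR /eqP Ej].
  have Hs : Pr i (Some s) (lam i).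
    apply: wpref_neq wp _ => E; move: inot; by rewrite assignedP iR -E eqxx.
  case: (lamor j) => Ej'; rewrite Ej' in Ej.
  + by move: (fairP muF sT iR Ej jR (Prw_trans Hs (lmu i))); rewrite Hp.
  + by move: (fairP mu'F sT iR Ej jR (Prw_trans Hs (lmu' i))); rewrite Hp.
Qed.


Lemma assigned_ext (f g : I -> option S) s : (forall i, i \in R -> f i = g i) ->
  assigned R f s = assigned R g s.
Proof. move=> H; apply/setP => i; rewrite !assignedP; case iR: (i \in R) => //=; by rewrite H. Qed.

Lemma stable_ext (pr : S -> rel I) (f g : I -> option S) : (forall i, i \in R -> f i = g i) ->
  stable R T Pr q pr f -> stable R T Pr q pr g.
Proof.
move=> H [[fT fC] fIR fNW fF]; split.
- split; first by move=> i iR s; rewrite -H //; exact: fT.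
  move=> s sT; rewrite -(assigned_ext s H); exact: fC.
- move=> i iR; rewrite -H //; exact: fIR.
- move=> i s iR sT; rewrite -H // -(assigned_ext s H); exact: fNW.
- move=> [s [i [j [sT [iR [jin [inot [wp Hp]]]]]]]]; apply: fF.
  exists s, i, j; rewrite !(assigned_ext s H) H //; by do 5 (split => //).
Qed.

Lemma stable_weaken (pr pr' : S -> rel I) (f : I -> option S) :
  (forall s i j, pr s i j -> pr' s i j) -> stable R T Pr q pr' f -> stable R T Pr q pr f.
Proof.
move=> H [fM fIR fNW fF]; split => // -[s [i [j [sT [iR [jin [inot [wp Hp]]]]]]]]; apply: fF.
exists s, i, j; do 5 (split => //); exact: H.
Qed.


Lemma Z (pr : S -> rel I) : (forall s, asymmetric (pr s)) -> (forall s, transitive (pr s)) ->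
  forall mu, sosm R T Pr q pr mu -> T != set0 -> (forall i, i \in R -> mu i <> None) ->
  exists2 s, s \in T & forall i, i \in R -> ~~ Pr i (Some s) (mu i).
Proof.
move=> Pas Ptr mu [[[muT muC] muIR muNW muF] muO] /set0Pn [s0 s0T] matched.
case: (boolP [exists s in T, [forall i in R, ~~ Pr i (Some s) (mu i)]]).
  move=> /existsP [s /andP [sT /forallP H]]; exists s => // i iR; move: (H i); by rewrite iR.
rewrite negb_exists => /forallP Hall; exfalso.
pose W s := [set j in R | Pr j (Some s) (mu j)].
have Wne : forall s, s \in T -> W s != set0.
  move=> s sT; move: (Hall s); rewrite sT /= negb_forall => /existsP [j].
  rewrite negb_imply negbK => /andP [jR H]; apply/set0Pn; exists j; by rewrite inE jR.
have [i0 _ _] : exists2 i0, i0 \in W s0 & true by case/set0Pn: (Wne _ s0T) => i H; exists i.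
pose d s := odflt i0 [pick j in W s | [forall k in W s, ~~ pr s k j]].
have dP : forall s, s \in T -> d s \in W s /\ forall k, k \in W s -> ~~ pr s k (d s).
  move=> s sT; rewrite /d; case: pickP => [j /andP [jW /forallP H] /=|Hn].
    split => // k kW; move: (H k); by rewrite kW.
  have [j jW Hj] := max_ex (Pas s) (Ptr s) (Wne _ sT).
  move: (Hn j); rewrite jW /=; move/negP; case; apply/forallP => k; apply/implyP; exact: Hj.
have dR : forall s, s \in T -> d s \in R by move=> s sT; have [H _] := dP s sT; move: H; rewrite inE => /andP[].
have dPr : forall s, s \in T -> Pr (d s) (Some s) (mu (d s)).
  by move=> s sT; have [H _] := dP s sT; move: H; rewrite inE => /andP[].
pose f s := odflt s0 (mu (d s)).
have fP : forall s, s \in T -> mu (d s) = Some (f s) /\ f s \in T.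
  move=> s sT; rewrite /f; case E: (mu (d s)) => [t|] /=; last by have := matched _ (dR _ sT).
  split => //; exact: muT (dR _ sT) _ E.
pose good (C : {set S}) := [&& C \subset T, C != set0 & f @: C \subset C].
have goodT : good T.
  rewrite /good subxx /=; apply/andP; split; first by apply/set0Pn; exists s0.
  apply/subsetP => t /imsetP [s sT ->]; exact: (fP _ sT).2.
case: (arg_minnP (fun C : {set S} => #|C|) goodT) => C /and3P [CT Cne fC] Cmin.
have fCeq : f @: C = C.
  apply/eqP; rewrite eqEcard fC /=; apply: Cmin; rewrite /good (subset_trans fC CT) /=.
  rewrite imsetS // andbT; apply/set0Pn; case/set0Pn: Cne => s sC; exists (f s); exact: imset_f.
have finj : {in C &, injective f}.
  apply/imset_injP; by rewrite fCeq.
have CT' : forall s, s \in C -> s \in T by move=> s sC; exact: (subsetP CT).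
have dinj : forall s s', s \in C -> s' \in C -> d s = d s' -> s = s'.
  move=> s s' sC s'C E; apply: finj => //.
  have := (fP _ (CT' _ sC)).1; have := (fP _ (CT' _ s'C)).1; rewrite E => -> [] //.
pose e i := [pick s in C | d s == i].
have eP : forall s, s \in C -> e (d s) = Some s.
  move=> s sC; rewrite /e; case: pickP => [s' /andP [s'C /eqP E]|Hn].
    by rewrite (dinj _ _ s'C sC E).
  by move: (Hn s); rewrite sC eqxx.
have eS : forall i s, e i = Some s -> s \in C /\ d s = i.
  move=> i s; rewrite /e; case: pickP => [s' /andP [s'C /eqP E] [<-]|] //.
pose lam i := if e i is Some s then Some s else mu i.
have ldom : forall i, wpref Pr i (lam i) (mu i).
  move=> i; rewrite /lam; case E: (e i) => [s|]; last exact: wpref_refl.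
  have [sC <-] := eS _ _ E; apply/orP; left; exact: dPr (CT' _ sC).
have lamT : forall i, i \in R -> forall s, lam i = Some s -> s \in T.
  move=> i iR s; rewrite /lam; case E: (e i) => [s'|]; last exact: muT.
  move=> [<-]; exact: CT' (eS _ _ E).1.
have lamC : forall t, t \in T -> #|assigned R lam t| <= q t.
  move=> t tT; apply: leq_trans (muC _ tT).
  case: (boolP (t \in C)) => tC.
  - have : t \in f @: C by rewrite fCeq.
    move=> /imsetP [s1 s1C Et].
    set k := d s1.
    have kin : k \in assigned R mu t.
      rewrite assignedP dR ?CT' //= (fP _ (CT' _ s1C)).1 Et eqxx //.
    apply: (@leq_trans #|d t |: (assigned R mu t :\ k)|).
      apply: subset_leq_card; apply/subsetP => i; rewrite assignedP => /andP [iR].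
      rewrite /lam; case E: (e i) => [s|].
        move=> /eqP [Est]; subst s; rewrite !inE; have [_ ->] := eS _ _ E; by rewrite eqxx.
      move=> /eqP Emu; rewrite !inE iR Emu eqxx !andbT orbC; apply/orP; left.
      apply/eqP => Eik; move: E; by rewrite Eik /k eP.
    by rewrite cardsU1 (cardsD1 k (assigned R mu t)) kin; case: (d t \notin _).
  - apply: subset_leq_card; apply/subsetP => i; rewrite !assignedP => /andP [iR].
    rewrite iR /lam; case E: (e i) => [s|] //= /eqP [Est]; subst s.
    by move: tC; rewrite (eS _ _ E).1.
have lamM : is_matching R T q lam by split.
have [Kc _] := K (conj muT muC) muIR muNW lamM (fun i _ => ldom i).
apply: muO; exists lam; split; last first.
  split; first by move=> i _; exact: ldom.
  case/set0Pn: Cne => s sC; exists (d s); split; first exact: dR (CT' _ sC).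
  rewrite /lam eP //; exact: dPr (CT' _ sC).
split => //.
- move=> i iR; exact: wpref_trans (ldom i) (muIR _ iR).
- move=> i s iR sT H.
  have H' : Pr i (Some s) (mu i) := Prw_trans H (ldom i).
  rewrite Kc //; apply/eqP; rewrite eqn_leq muC //=; by rewrite (muNW _ _ iR sT H').
- move=> [s [i [j [sT [iR [jin [inot [wp Hp]]]]]]]].
  move: jin; rewrite assignedP => /andP [jR /eqP Ej].
  have Hs : Pr i (Some s) (lam i).
    apply: wpref_neq wp _ => E; move: inot; by rewrite assignedP iR -E eqxx.
  have Hsm := Prw_trans Hs (ldom i).
  move: Ej; rewrite /lam; case E: (e j) => [s'|] Ej.
  + case: Ej => Es; subst s'; have [sC dj] := eS _ _ E.
    have [_ Hmax] := dP s sT.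
    have iW : i \in W s by rewrite inE iR Hsm.
    by move: (Hmax _ iW); rewrite dj Hp.
  + by move: (fairP muF sT iR Ej jR Hsm); rewrite Hp.
Qed.

End Prob.

Lemma total_sto (T : Type) (r : rel T) : total_order r -> sto r.
Proof. by move=> [[Ha Ht] [_ Hc]]. Qed.

Section MP.
Variables (I S : finType) (P : I -> rel (option S)).
Hypothesis HP : forall i, sto (P i).

Lemma modpref_sto del j : sto (modpref P del j).
Proof.
have [Ha [Ht Hc]] := HP j.
split; [|split].
- move=> x y; rewrite /modpref.
  case: (is_deleted del j x); case: (is_deleted del j y) => //=; exact: Ha.
- move=> y x z; rewrite /modpref.
  case: (is_deleted del j x); case: (is_deleted del j y); case: (is_deleted del j z) => //=; exact: Ht.
- move=> x y ne; rewrite /modpref.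
  case: (is_deleted del j x); case: (is_deleted del j y) => //=; auto; exact: Hc.
Qed.

Lemma md_nd del j x y : ~~ is_deleted del j x -> ~~ is_deleted del j y ->
  modpref P del j x y = P j x y.
Proof. by rewrite /modpref => /negbTE -> /negbTE ->. Qed.

Lemma md_y del j x y : ~~ is_deleted del j y -> modpref P del j x y ->
  ~~ is_deleted del j x && P j x y.
Proof. rewrite /modpref => /negbTE ->; by case: (is_deleted del j x). Qed.

Lemma IR_nd del j x : wpref (modpref P del) j x None -> ~~ is_deleted del j x.
Proof. by move=> /orP [/(md_y (isT : ~~ is_deleted del j None)) /andP[]|/eqP ->]. Qed.

Lemma nd_sub (del del' : I -> {set S}) j x : (forall j, del j \subset del' j) ->
  ~~ is_deleted del' j x -> ~~ is_deleted del j x.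
Proof.
move=> sub; case: x => //= s; apply: contra => H; exact: (subsetP (sub j)).
Qed.

Lemma md_down (del del' : I -> {set S}) j x y : (forall j, del j \subset del' j) ->
  ~~ is_deleted del' j y -> modpref P del' j x y -> modpref P del j x y.
Proof.
move=> sub ny /(md_y ny) /andP [nx H]; rewrite md_nd //; exact: nd_sub sub _.
Qed.

Lemma md_up (del del' : I -> {set S}) j x y :
  ~~ is_deleted del' j x -> ~~ is_deleted del' j y -> (forall j, del j \subset del' j) ->
  modpref P del j x y -> modpref P del' j x y.
Proof.
move=> nx ny sub; rewrite !md_nd //; exact: nd_sub sub _.
Qed.

Lemma wmd_down (del del' : I -> {set S}) j x y : (forall j, del j \subset del' j) ->
  ~~ is_deleted del' j y -> wpref (modpref P del') j x y -> wpref (modpref P del) j x y.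
Proof.
move=> sub ny /orP [H|H]; apply/orP; [left; exact: md_down H | by right].
Qed.

Lemma wmd_up (del del' : I -> {set S}) j x y :
  ~~ is_deleted del' j x -> ~~ is_deleted del' j y -> (forall j, del j \subset del' j) ->
  wpref (modpref P del) j x y -> wpref (modpref P del') j x y.
Proof.
move=> nx ny sub /orP [H|H]; apply/orP; [left; exact: md_up H | by right].
Qed.

Lemma modpref0 : modpref P (fun _ => set0) = P.
Proof.
apply: FunctionalExtensionality.functional_extensionality => j.
apply: FunctionalExtensionality.functional_extensionality => x.
apply: FunctionalExtensionality.functional_extensionality => y.
by case: x => [s|]; case: y => [t|]; rewrite /modpref /= ?inE.
Qed.

End MP.

Section EAS.
Variables (I S : finType) (P : I -> rel (option S)) (q : S -> nat) (pri pri' : S -> rel I).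
Hypothesis HP : forall i, sto (P i).
Hypothesis Hpri : forall s, partial_order (pri s).
Hypothesis Hext : forall s i j, pri s i j -> pri' s i j.

Definition J1 (R : {set I}) (T : {set S}) (del : I -> {set S}) (out : I -> option S) :=
  forall j s, j \in R -> s \in T -> s \in del j ->
    exists l, l \notin R /\ P l (Some s) (out l) /\ pri s l j.
Definition J2 (R : {set I}) (T : {set S}) (del : I -> {set S}) (out : I -> option S) :=
  forall l j s, l \notin R -> j \in R -> s \in T -> P l (Some s) (out l) -> pri s l j ->
    s \in del j.

Lemma pri_trans s a b c : pri s a b -> pri s b c -> pri s a c.
Proof. have [_ Ht] := Hpri s; exact: Ht. Qed.

Lemma Jdel R T del out l i s : J1 R T del out -> J2 R T del out ->
  l \in R -> i \in R -> s \in T -> s \in del l -> pri s l i -> s \in del i.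
Proof.
move=> H1 H2 lR iR sT sd pli.
have [l' [l'R [Hl' pl']]] := H1 _ _ lR sT sd.
exact: (H2 l' i s l'R iR sT Hl' (pri_trans pl' pli)).
Qed.

Section Step.
Variables (R : {set I}) (T : {set S}) (del : I -> {set S}) (out mu : I -> option S).
Hypothesis HJ1 : J1 R T del out.
Hypothesis HJ2 : J2 R T del out.
Hypothesis Hmu : stable R T (modpref P del) q pri' mu.

Definition U := underdemanded P R T del mu.
Definition D := removed_students R U mu.
Definition R' := R :\: D.
Definition T' := T :\: U.
Definition del' := new_del P pri R' T' D mu del.
Definition out' := fun i => if i \in D then mu i else out i.

Lemma HPd j : sto (modpref P del j).
Proof. exact: modpref_sto. Qed.
Lemma HPd' j : sto (modpref P del' j).
Proof. exact: modpref_sto. Qed.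

Lemma U_T s : s \in U -> s \in T.
Proof. by rewrite inE => /andP[]. Qed.
Lemma U_nd s i : s \in U -> i \in R -> ~~ modpref P del i (Some s) (mu i).
Proof. rewrite inE => /andP [_ /forallP H] iR; move: (H i); by rewrite iR. Qed.
Lemma D_R i : i \in D -> i \in R.
Proof. by rewrite inE => /andP[]. Qed.
Lemma D_mu i s : i \in D -> mu i = Some s -> s \in U.
Proof. by rewrite inE => /andP [_]; case: (mu i) => // s' H [<-]. Qed.
Lemma D_nT' i s : i \in D -> mu i = Some s -> s \notin T'.
Proof. move=> iD E; by rewrite inE (D_mu iD E). Qed.
Lemma R'P i : i \in R' = (i \notin D) && (i \in R).
Proof. by rewrite inE. Qed.
Lemma T'P s : s \in T' = (s \notin U) && (s \in T).
Proof. by rewrite inE. Qed.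
Lemma R'_R i : i \in R' -> i \in R.
Proof. by rewrite R'P => /andP[]. Qed.
Lemma T'_T s : s \in T' -> s \in T.
Proof. by rewrite T'P => /andP[]. Qed.
Lemma notD i : i \in R -> i \notin D -> exists s, mu i = Some s /\ s \in T'.
Proof.
move=> iR; rewrite inE iR /=; case E: (mu i) => [s|] // nU; exists s; split => //.
have [[muT _] _ _ _] := Hmu.
by rewrite T'P nU (muT _ iR _ E).
Qed.
Lemma sub_del j : del j \subset del' j.
Proof. by rewrite /del' /new_del subsetUl. Qed.
Lemma del'P j s : s \in del' j -> s \in del j \/
  (s \in T' /\ j \in R' /\ exists l, l \in D /\ P l (Some s) (mu l) /\ pri s l j).
Proof.
rewrite /del' /new_del in_setU => /orP [H|]; first by left.
rewrite inE => /andP [sT /andP [jR /existsP [l /andP [lD /andP [H1 H2]]]]].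
right; split => //; split => //; by exists l.
Qed.
Lemma del'_new l j s : l \in D -> s \in T' -> j \in R' -> P l (Some s) (mu l) -> pri s l j ->
  s \in del' j.
Proof.
move=> lD sT jR H1 H2; rewrite /del' /new_del in_setU; apply/orP; right.
rewrite inE sT jR /=; apply/existsP; exists l; by rewrite lD H1 H2.
Qed.

Lemma J1' : J1 R' T' del' out'.
Proof.
move=> j s jR sT /del'P [sd|[_ [_ [l [lD [H1 H2]]]]]].
- have [l [lR [H1 H2]]] := HJ1 (R'_R jR) (T'_T sT) sd.
  exists l; split; first by rewrite R'P negb_and lR orbT.
  have lD : l \notin D by apply: contra lR; exact: D_R.
  by rewrite /out' (negbTE lD).
- exists l; split; first by rewrite R'P lD.
  by rewrite /out' lD.
Qed.

Lemma J2' : J2 R' T' del' out'.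
Proof.
move=> l j s lR jR sT; rewrite /out'; case: ifP => [lD H1 H2|lD H1 H2].
- exact: (del'_new lD sT jR H1 H2).
- have lR0 : l \notin R by move: lR; rewrite R'P lD /=.
  apply: (subsetP (sub_del j)); exact: HJ2 lR0 (R'_R jR) (T'_T sT) H1 H2.
Qed.


Lemma asg_eq (lam : I -> option S) s : (forall i, i \in D -> lam i = mu i) -> s \in T' ->
  assigned R' lam s = assigned R lam s.
Proof.
move=> Hl sT; apply/setP => i; rewrite !assignedP R'P.
case iD: (i \in D) => /=; last by [].
rewrite (D_R iD) /= Hl //; symmetry; apply/negbTE/eqP => E.
by move: sT; rewrite (negbTE (D_nT' iD E)).
Qed.

Lemma restrict (pr : S -> rel I) (lam : I -> option S) :
  (forall s i j, pri s i j -> pr s i j) ->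
  stable R T (modpref P del) q pr lam ->
  (forall i, i \in D -> lam i = mu i) ->
  (forall i, i \in R' -> forall s, lam i = Some s -> s \in T') ->
  stable R' T' (modpref P del') q pr lam.
Proof.
move=> ext [[lT lC] lIR lNW lF] lD lT'.
have nd : forall i, i \in R' -> ~~ is_deleted del' i (lam i).
  move=> i iR; case E: (lam i) => [s|] //=.
  have sT' := lT' _ iR _ E.
  have nd0 := IR_nd (lIR _ (R'_R iR)); rewrite E /= in nd0.
  apply/negP => /del'P [sd|[_ [_ [l [lD0 [H1 H2]]]]]]; first by rewrite sd in nd0.
  have lR := D_R lD0.
  have nsl : s \notin del l.
    apply/negP => sdl; have := Jdel HJ1 HJ2 lR (R'_R iR) (T'_T sT') sdl H2.
    by rewrite (negbTE nd0).
  have ndl := IR_nd (lIR _ lR); rewrite (lD _ lD0) in ndl.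
  have Hm : modpref P del l (Some s) (lam l) by rewrite (lD _ lD0) md_nd.
  have := fairP HPd lF (T'_T sT') lR E (R'_R iR) Hm.
  by rewrite ext.
split.
- split; first exact: lT'.
  move=> s sT; rewrite asg_eq //; apply: lC; exact: T'_T.
- move=> i iR; apply: wmd_up (nd _ iR) _ sub_del (lIR _ (R'_R iR)) => //.
- move=> i s iR sT H.
  rewrite asg_eq //; apply: lNW (R'_R iR) (T'_T sT) _.
  exact: md_down sub_del (nd _ iR) H.
- move=> [s [i [j [sT [iR [jin [inot [wp Hp]]]]]]]].
  apply: lF; exists s, i, j; split; first exact: T'_T.
  split; first exact: R'_R.
  rewrite -!asg_eq //; do 3 (split => //).
  exact: wmd_down sub_del (nd _ iR) wp.
Qed.

Lemma mu_restrict : stable R' T' (modpref P del') q pri' mu.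
Proof.
apply: restrict => //.
move=> i iR s E; move: (iR); rewrite R'P => /andP [nD iR0].
have [s' [E' sT]] := notD iR0 nD.
by rewrite E in E'; case: E' => ->.
Qed.

Lemma dom_fix (lam : I -> option S) : is_matching R T q lam ->
  (forall i, i \in R -> wpref (modpref P del) i (lam i) (mu i)) ->
  (forall i, i \in D -> lam i = mu i) /\
  (forall i, i \in R' -> forall s, lam i = Some s -> s \in T').
Proof.
move=> lM dom.
have [muM muIR muNW _] := Hmu.
have [Kc Ki] := K HPd muM muIR muNW lM dom.
split.
- move=> i iD; apply/eqP; apply/negPn/negP => /eqP ne.
  have [s [E [j [jR [_ H]]]]] := Ki _ (D_R iD) ne.
  by move: (U_nd (D_mu iD E) jR); rewrite H.
- move=> i iR s E; rewrite T'P; have [lT _] := lM.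
  rewrite (lT _ (R'_R iR) _ E) andbT; apply/negP => sU.
  have := U_nd sU (R'_R iR); rewrite -E => H.
  have := dom _ (R'_R iR); move/orP => [H'|/eqP E']; first by rewrite H' in H.
  have iD : i \in D by rewrite inE (R'_R iR) -E' E.
  by move: iR; rewrite R'P iD.
Qed.

Lemma glue (lam : I -> option S) :
  (forall i, i \in D -> lam i = mu i) ->
  stable R' T' (modpref P del') q pri lam ->
  (forall i, i \in R' -> wpref (modpref P del') i (lam i) (mu i)) ->
  stable R T (modpref P del) q pri lam /\
  (forall i, i \in R -> wpref (modpref P del) i (lam i) (mu i)).
Proof.
move=> lD [[lT lC] lIR lNW lF] dom'.
have [[muT muC] muIR muNW muF] := Hmu.
have [_ mu'IR _ _] := mu_restrict.
have ndl : forall i, i \in R' -> ~~ is_deleted del' i (lam i).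
  move=> i iR; exact: IR_nd (lIR _ iR).
have ndm : forall i, i \in R' -> ~~ is_deleted del' i (mu i).
  move=> i iR; exact: IR_nd (mu'IR _ iR).
have dom : forall i, i \in R -> wpref (modpref P del) i (lam i) (mu i).
  move=> i iR; case iD: (i \in D); first by rewrite lD // wpref_refl.
  have iR' : i \in R' by rewrite R'P iD.
  exact: wmd_down sub_del (ndm _ iR') (dom' _ iR').
have lamT : forall i, i \in R -> forall s, lam i = Some s -> s \in T.
  move=> i iR s; case iD: (i \in D); first by rewrite lD //; exact: muT.
  have iR' : i \in R' by rewrite R'P iD.
  move=> E; apply: T'_T; exact: lT iR' _ E.
have lamM : is_matching R T q lam.
  split => // s sT; case sT': (s \in T').
  - by rewrite -asg_eq //; exact: lC.
  - apply: leq_trans (muC _ sT); apply: subset_leq_card; apply/subsetP => i.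
    rewrite !assignedP => /andP [iR /eqP E]; rewrite iR /=.
    case iD: (i \in D); first by rewrite -lD // E.
    have iR' : i \in R' by rewrite R'P iD.
    by move: sT'; rewrite (lT _ iR' _ E).
have [Kc _] := K HPd (conj muT muC) muIR muNW lamM dom.
split => //; split => //.
- move=> i iR; case iD: (i \in D); first by rewrite lD //; exact: muIR.
  have iR' : i \in R' by rewrite R'P iD.
  exact: wmd_down sub_del (isT : ~~ is_deleted del' i None) (lIR _ iR').
- move=> i s iR sT H.
  have H' := Prw_trans HPd H (dom _ iR).
  rewrite Kc //; apply/eqP; rewrite eqn_leq muC //=; by rewrite (muNW _ _ iR sT H').
- move=> [s [i [j [sT [iR [jin [inot [wp Hp]]]]]]]].
  move: jin; rewrite assignedP => /andP [jR /eqP Ej].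
  have Hs : modpref P del i (Some s) (lam i).
    apply: wpref_neq wp _ => E; move: inot; by rewrite assignedP iR -E eqxx.
  have Hsm := Prw_trans HPd Hs (dom _ iR).
  case jD: (j \in D).
  + rewrite lD // in Ej.
    by move: (fairP HPd muF sT iR Ej jR Hsm); rewrite Hext.
  have jR' : j \in R' by rewrite R'P jD.
  have sT' := lT _ jR' _ Ej.
  have ndj := ndl _ jR'; rewrite Ej /= in ndj.
  have ndmi := IR_nd (muIR _ iR).
  have [nsi Psi] := andP (md_y ndmi Hsm).
  case iD: (i \in D).
  + by rewrite (del'_new iD sT' jR' Psi Hp) in ndj.
  have iR' : i \in R' by rewrite R'P iD.
  case: (boolP (s \in del' i)) => sdi.
  + case: (del'P sdi) => [sd|[_ [_ [l [lD0 [H1 H2]]]]]]; first by move: nsi; rewrite /= sd.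
    by rewrite (del'_new lD0 sT' jR' H1 (pri_trans H2 Hp)) in ndj.
  + apply: lF; exists s, i, j; split => //; split => //.
    split; first by rewrite assignedP jR' Ej eqxx.
    split; first by rewrite asg_eq // assignedP.
    split => //; apply/orP; left; apply: md_up (ndl _ iR') sub_del _ => //.
Qed.

End Step.
End EAS.

Section Good.
Variables (I S : finType) (P : I -> rel (option S)) (q : S -> nat) (pri pri' : S -> rel I).
Hypothesis HP : forall i, sto (P i).
Hypothesis Hpri : forall s, partial_order (pri s).
Hypothesis Hext : forall s i j, pri s i j -> pri' s i j.
Hypothesis Has' : forall s, asymmetric (pri' s).
Hypothesis Hco' : forall s, complete_rel (pri' s).

Lemma run_good R T del out final : eadam_run P q pri pri' R T del out final ->
  J1 P pri R T del out -> J2 P pri R T del out ->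
  (forall i, i \notin R -> final i = out i) /\
  stable R T (modpref P del) q pri final /\
  (exists mu0, sosm R T (modpref P del) q pri' mu0 /\
     forall i, i \in R -> wpref (modpref P del) i (final i) (mu0 i)) /\
  ~ (exists lam, stable R T (modpref P del) q pri lam /\
       pareto_dominates R (modpref P del) lam final).
Proof.
elim => {R T del out final}.
- move=> R T del out mu final Hs U0 D0 out0 HT Hf HJ1 HJ2.
  have Hmu := Hs.1.
  have HPd := modpref_sto HP del.
  have finD : forall i, i \in D P R T del mu -> final i = mu i.
    by move=> i iD; rewrite Hf /out0 /D0 /U0; rewrite iD.
  have RD : forall i, i \in R -> i \in D P R T del mu.
    move=> i iR; apply/negPn/negP => nD.
    have [s [_ sT]] := notD Hmu iR nD.
    by move: HT sT; rewrite /T' /U0 => ->; rewrite inE.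
  have finR : forall i, i \in R -> final i = mu i by move=> i iR; rewrite finD // RD.
  split.
    move=> i iR; rewrite Hf /out0 /D0 /U0; case: ifP => // iD.
    by move: iR; rewrite (D_R iD).
  split.
    apply: stable_ext (fun i iR => esym (finR i iR)) _.
    exact: stable_weaken Hext Hmu.
  split.
    exists mu; split => // i iR; rewrite finR //; exact: wpref_refl.
  move=> [lam [[lM lIR lNW lF] [ldom [i [iR Hi]]]]].
  have dom : forall i, i \in R -> wpref (modpref P del) i (lam i) (mu i).
    by move=> j jR; rewrite -finR //; exact: ldom.
  have [Hfix _] := dom_fix HP Hmu lM dom.
  by move: Hi; rewrite Hfix ?RD // -finR // (negbTE (Pr_irr HPd _ _)).
- move=> R T del out mu final Hs U0 D0 R0 T0 out0 HT Hrun IH HJ1 HJ2.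
  have Hmu := Hs.1.
  have HPd := modpref_sto HP del.
  have HPd' := modpref_sto HP (del' P pri R T del mu).
  have [Hout [Hst [[mu0 [Hmu0 Hge0]] Hnd]]] :=
    IH (J1' HJ1) (J2' HJ2).
  have outD : forall i, i \in D P R T del mu -> final i = mu i.
    move=> i iD; rewrite Hout; first by rewrite /out0 /D0 /U0 iD.
    by rewrite /R0 /D0 /U0 inE iD.
  have Hres := mu_restrict HP Hpri Hext HJ1 HJ2 Hmu.
  have ge' : forall i, i \in R' P R T del mu ->
      wpref (modpref P (del' P pri R T del mu)) i (final i) (mu i).
    move=> i iR; apply: (wpref_trans HPd' (Hge0 _ iR)).
    exact: (L1 HPd' Has' Hco' Hmu0 Hres iR).
  have [Gst Gge] := glue HP Hpri Hext HJ1 HJ2 Hmu outD Hst ge'.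
  split.
    move=> i iR; rewrite Hout; first by rewrite /out0 /D0 /U0; case: ifP => // iD; move: iR; rewrite (D_R iD).
    by rewrite /R0 inE negb_and iR orbT.
  split => //.
  split; first by exists mu.
  move=> [lam [lst [ldom [i [iR Hi]]]]].
  have [lM lIR _ _] := lst.
  have dom : forall i, i \in R -> wpref (modpref P del) i (lam i) (mu i).
    move=> j jR; exact: (wpref_trans HPd (ldom _ jR) (Gge _ jR)).
  have [Hfix Hval] := dom_fix HP Hmu lM dom.
  have lst' := restrict HP Hpri HJ1 HJ2 (fun s i j H => H) lst Hfix Hval.
  have [_ lIR' _ _] := lst'.
  have [_ fIR' _ _] := Hst.
  apply: Hnd; exists lam; split => //; split.
    move=> j jR; apply: (wmd_up _ _ (sub_del P pri R T del mu) (ldom _ (R'_R jR))).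
    - exact: IR_nd (lIR' _ jR).
    - exact: IR_nd (fIR' _ jR).
  have iR' : i \in R' P R T del mu.
    rewrite R'P iR andbT; apply/negP => iD.
    by move: Hi; rewrite Hfix // outD // (negbTE (Pr_irr HPd _ _)).
  exists i; split => //.
  apply: (md_up _ _ (sub_del P pri R T del mu) Hi).
  - exact: IR_nd (lIR' _ iR').
  - exact: IR_nd (fIR' _ iR').
Qed.

End Good.

Section Ext.
Variables (I S : finType) (P : I -> rel (option S)) (pri : S -> rel I) (mu : I -> option S).
Hypothesis HP : forall i, sto (P i).
Hypothesis Hpri : forall s, partial_order (pri s).
Hypothesis Hfair : fair [set: I] [set: S] P pri mu.

Lemma key_fact s w m : P w (Some s) (mu w) -> mu m = Some s -> (w <> m) /\ ~~ pri s w m.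
Proof.
move=> Hw Hm; split.
  move=> E; subst; move: Hw; by rewrite Hm (negbTE (Pr_irr HP _ _)).
have := fairP HP Hfair (in_setT s) (in_setT w) Hm (in_setT m) Hw. by [].
Qed.

Definition Qr s a b := pri s a b || [exists m, exists w,
  [&& mu m == Some s, P w (Some s) (mu w), (a == m) || pri s a m & (w == b) || pri s w b]].

Lemma ptrans s a b c : pri s a b -> pri s b c -> pri s a c.
Proof. have [_ Ht] := Hpri s; exact: Ht. Qed.
Lemma pirr s a : ~~ pri s a a.
Proof. have [Ha _] := Hpri s; apply/negP => H; move: (Ha _ _ H); by rewrite H. Qed.

Lemma no_wm s w m x : P w (Some s) (mu w) -> mu m = Some s ->
  (w == x) || pri s w x -> (x == m) || pri s x m -> False.
Proof.
move=> Hw Hm /orP [/eqP <-|H1] /orP [/eqP E|H2].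
- by have [ne _] := key_fact Hw Hm.
- by have [_ /negP] := key_fact Hw Hm.
- subst; by have [_ /negP] := key_fact Hw Hm.
- have [_ /negP] := key_fact Hw Hm; apply; exact: ptrans H1 H2.
Qed.

Lemma Qirr s a : ~~ Qr s a a.
Proof.
rewrite /Qr negb_or pirr /=; apply/existsP => -[m /existsP [w /and4P [/eqP Hm Hw H1 H2]]].
exact: no_wm Hw Hm H2 H1.
Qed.

Lemma Qtrans s a b c : Qr s a b -> Qr s b c -> Qr s a c.
Proof.
rewrite /Qr => /orP [H1|/existsP [m1 /existsP [w1 /and4P [/eqP Hm1 Hw1 A1 B1]]]]
  /orP [H2|/existsP [m2 /existsP [w2 /and4P [/eqP Hm2 Hw2 A2 B2]]]].
- by rewrite (ptrans H1 H2).
- apply/orP; right; apply/existsP; exists m2; apply/existsP; exists w2.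
  rewrite Hm2 eqxx Hw2 B2 /= andbT; apply/orP; right.
  case/orP: A2 => [/eqP <-//|H]; exact: ptrans H1 H.
- apply/orP; right; apply/existsP; exists m1; apply/existsP; exists w1.
  rewrite Hm1 eqxx Hw1 A1 /=; apply/orP; right.
  case/orP: B1 => [/eqP ->//|H]; exact: ptrans H H2.
- exfalso; exact: no_wm Hw1 Hm2 B1 A2.
Qed.

Definition kap s x := #|[set y | Qr s y x]|.
Definition key s x := kap s x * #|I| + enum_rank x.
Definition priE s a b := key s a < key s b.

Lemma Q_kap s a b : Qr s a b -> kap s a < kap s b.
Proof.
move=> H; apply: proper_card; apply/properP; split.
  apply/subsetP => y; rewrite !inE => Hy; exact: Qtrans Hy H.
exists a; rewrite !inE //; exact: Qirr.
Qed.

Lemma rank_lt (x : I) : (enum_rank x : nat) < #|I|.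
Proof. exact: ltn_ord. Qed.

Lemma Q_pri' s a b : Qr s a b -> priE s a b.
Proof.
move=> H; rewrite /priE /key; have h1 := Q_kap H; have h2 := rank_lt a.
have h3 : kap s a * #|I| + #|I| <= kap s b * #|I|.
  rewrite addnC -mulSn leq_mul2r h1 orbT //.
lia.
Qed.

Lemma pri'_total s : total_order (priE s).
Proof.
rewrite /priE; split; [split|split].
- by move=> x y H; rewrite -leqNgt ltnW.
- by move=> y x z H1 H2; exact: ltn_trans H1 H2.
- by move=> x y z; rewrite -!leqNgt => H1 H2; exact: leq_trans H2 H1.
- move=> x y ne; case: (ltngtP (key s x) (key s y)); auto => E; exfalso; apply: ne.
  apply: enum_rank_inj; apply/val_inj => /=.
  have := congr1 (fun n => n %% #|I|) E; rewrite /key /= !modnMDl !modn_small //; exact: rank_lt.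
Qed.

Lemma ext_ok : extension pri priE /\ fair [set: I] [set: S] P priE mu.
Proof.
split.
  move=> s; split; first exact: pri'_total.
  move=> i j H; apply: Q_pri'; by rewrite /Qr H.
move=> [s [i [j [_ [_ [jin [inot [wp Hp]]]]]]]].
move: jin; rewrite assignedP => /andP [_ /eqP Hj].
have Hi : P i (Some s) (mu i).
  apply: wpref_neq wp _ => E; move: inot; by rewrite assignedP in_setT -E eqxx.
have : priE s j i.
  apply: Q_pri'; apply/orP; right; apply/existsP; exists j; apply/existsP; exists i.
  by rewrite Hj eqxx Hi !eqxx.
have [[Ha _] _] := pri'_total s.
by move/Ha; rewrite Hp.
Qed.

End Ext.

Section Build.
Variables (I S : finType) (P : I -> rel (option S)) (q : S -> nat) (pri pri' : S -> rel I).
Variable mu : I -> option S.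
Hypothesis HP : forall i, sto (P i).
Hypothesis Hpri : forall s, partial_order (pri s).
Hypothesis Hext : forall s i j, pri s i j -> pri' s i j.
Hypothesis Htot' : forall s, total_order (pri' s).

Definition G (R : {set I}) (T : {set S}) (del : I -> {set S}) := forall lam, stable R T (modpref P del) q pri lam ->
  (forall i, i \in R -> wpref (modpref P del) i (lam i) (mu i)) ->
  forall i, i \in R -> lam i = mu i.

Lemma build_step (R : {set I}) (T : {set S}) (del : I -> {set S}) (out : I -> option S) :
  (forall (R0 : {set I}) (T0 : {set S}) (del0 : I -> {set S}) (out0 : I -> option S), #|R0| + #|T0| < #|R| + #|T| ->
     J1 P pri R0 T0 del0 out0 -> J2 P pri R0 T0 del0 out0 ->
     stable R0 T0 (modpref P del0) q pri' mu -> G R0 T0 del0 ->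
     (forall i, i \notin R0 -> out0 i = mu i) ->
     eadam_run P q pri pri' R0 T0 del0 out0 mu) ->
  J1 P pri R T del out -> J2 P pri R T del out ->
  stable R T (modpref P del) q pri' mu -> G R T del ->
  (forall i, i \notin R -> out i = mu i) ->
  eadam_run P q pri pri' R T del out mu.
Proof.
have Has' : forall s, asymmetric (pri' s) by move=> s; have [[]] := Htot' s.
have Htr' : forall s, transitive (pri' s) by move=> s; have [[]] := Htot' s.
move=> IH HJ1 HJ2 Hmu HG Hout.
have HPd := modpref_sto HP del.
have Hsosm : sosm R T (modpref P del) q pri' mu.
  split => // -[lam [lst [ldom [i [iR Hi]]]]].
  have := HG lam (stable_weaken Hext lst) ldom i iR.
  by move=> E; move: Hi; rewrite E (negbTE (Pr_irr HPd _ _)).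
case: (eqVneq (T' P R T del mu) set0) => HT.
- refine (eadam_stop pri Hsosm _ _); first exact: HT.
  move=> i /=; case: ifP => // iD.
  case iR: (i \in R); last by rewrite Hout // iR.
  have [s [_ sT]] := notD Hmu iR (negbT iD).
  by move: sT; rewrite HT inE.
- have HJ1' := J1' HJ1 (mu := mu).
  have HJ2' := J2' HJ2 (mu := mu).
  have Hres := mu_restrict HP Hpri Hext HJ1 HJ2 Hmu.
  refine (eadam_continue Hsosm _ (IH _ _ _ _ _ HJ1' HJ2' Hres _ _)).
  + by move=> E; move: HT; rewrite /T' /U E eqxx.
  +
    have subR : R' P R T del mu \subset R by apply/subsetP => i; exact: R'_R.
    have subT : T' P R T del mu \subset T by apply/subsetP => s; exact: T'_T.
    case: (boolP (D P R T del mu == set0)) => HD.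
    * have matched : forall i, i \in R -> mu i <> None.
        move=> i iR E; have : i \in D P R T del mu by rewrite inE iR E.
        by rewrite (eqP HD) inE.
      have Tne : T != set0.
        apply/set0Pn; case/set0Pn: HT => s sT; exists s; exact: (T'_T sT).
      have [s sT Hs] := Z HPd Has' Htr' Hsosm Tne matched.
      have sU : s \in U P R T del mu.
        rewrite inE sT /=; apply/forallP => i; apply/implyP; exact: Hs.
      have : #|T' P R T del mu| < #|T|.
        apply: proper_card; apply/properP; split => //; exists s => //.
        by rewrite T'P sU.
      have := subset_leq_card subR; lia.
    * have : #|R' P R T del mu| < #|R|.
        apply: proper_card; apply/properP; split => //.
        case/set0Pn: HD => i iD; exists i; first exact: D_R iD.
        by rewrite R'P iD.
      have := subset_leq_card subT; lia.
  +
    move=> lam lst ldom i iR.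
    pose lam2 i := if i \in D P R T del mu then mu i else lam i.
    have l2D : forall i, i \in D P R T del mu -> lam2 i = mu i by move=> j jD; rewrite /lam2 jD.
    have l2R : forall i, i \in R' P R T del mu -> lam i = lam2 i.
      move=> j jR; rewrite /lam2; move: jR; rewrite R'P => /andP [nD _]; by rewrite (negbTE nD).
    have lst2 := stable_ext l2R lst.
    have ldom2 : forall i, i \in R' P R T del mu ->
        wpref (modpref P (del' P pri R T del mu)) i (lam2 i) (mu i).
      by move=> j jR; rewrite -l2R //; exact: ldom.
    have [Gst Gge] := glue HP Hpri Hext HJ1 HJ2 Hmu l2D lst2 ldom2.
    by rewrite l2R // (HG _ Gst Gge _ (R'_R iR)).
  +
    move=> i iR; rewrite /out'; case: ifP => // iD.
    apply: Hout; apply: contra iR => iR0; by rewrite R'P iD iR0.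
Qed.

Lemma build n : forall (R : {set I}) (T : {set S}) (del : I -> {set S}) (out : I -> option S),
  #|R| + #|T| = n ->
  J1 P pri R T del out -> J2 P pri R T del out ->
  stable R T (modpref P del) q pri' mu -> G R T del ->
  (forall i, i \notin R -> out i = mu i) ->
  eadam_run P q pri pri' R T del out mu.
Proof.
elim/ltn_ind: n => n IH R T del out Hn.
apply: build_step => R0 T0 del0 out0 Hlt; apply: (IH _ _ R0 T0 del0 out0 erefl).
by rewrite -Hn.
Qed.

End Build.

Theorem corollary5 (I S : finType) (P : I -> rel (option S)) (q : S -> nat)
  (pri : S -> rel I) :
  3 <= #|I| ->
  (forall i, total_order (P i)) ->
  (forall s, 0 < q s) ->
  (forall s, partial_order (pri s)) ->
  forall mu : I -> option S,
    f_sosm P q pri mu <->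
    exists pri' : S -> rel I, extension pri pri' /\ EA P q pri pri' mu.
Proof.
move=> _ HPt _ Hpri mu.
have HP : forall i, sto (P i) := fun i => total_sto (HPt i).
have HJ1 : forall pr, J1 P pr [set: I] [set: S] (fun _ => set0) (fun _ => None).
  by move=> pr j s _ _; rewrite inE.
have HJ2 : forall pr, J2 P pr [set: I] [set: S] (fun _ => set0) (fun _ => None).
  by move=> pr l j s; rewrite in_setT.
split.
- move=> [[HM HIR HNW HF] Hnd].
  have [Hext Hf'] := ext_ok HP Hpri HF.
  exists (priE P pri mu); split => //.
  have Htot' := fun s => (Hext s).1.
  have Hext' := fun s => (Hext s).2.
  apply: (build HP Hpri Hext' Htot' (erefl _) (HJ1 _) (HJ2 _)).
  + by rewrite modpref0.
  + move=> lam; rewrite modpref0 => lst ldom i iR.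
    apply/eqP; apply/negPn/negP => ne; apply: Hnd; exists lam; split => //.
    split => //; exists i; split => //; exact: wpref_neq (ldom _ iR) (elimN eqP ne).
  + by move=> i; rewrite in_setT.
- move=> [pri' [Hext HEA]].
  have Has' : forall s, asymmetric (pri' s) by move=> s; have [[[]]] := Hext s.
  have Hco' : forall s, complete_rel (pri' s) by move=> s; have [[_ [_ ]]] := Hext s.
  have := run_good HP Hpri (fun s i j H => (Hext s).2 i j H) Has' Hco' HEA (HJ1 pri) (HJ2 pri).
  rewrite modpref0 => -[_ [Hst [_ Hnd]]]; by split.
Qed.
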